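(* Let $S$ be a $\mathcal{C}$-semigroup with $S\neq\mathcal{C}$ and genus $g$. Then $S$ is pseudo-symmetric if and only if $g=1+\# I_S(F(S))$ and $F(S)/2\in\mathbb{N}^p$.
   Context: An integer cone $\mathcal{C}\subseteq\mathbb{N}^p$ is the set of integer points of a finitely generated rational cone in $\mathbb{Q}_{\ge0}^p$. A $\mathcal{C}$-semigroup is a subset $S\subseteq\mathcal{C}$ containing $0$, closed under addition, with $\mathcal{C}\setminus S$ finite; $\mathcal{H}(S)=\mathcal{C}\setminus S$ and $g=\#\mathcal{H}(S)$. A monomial order $\preceq$ on $\mathbb{N}^p$ is fixed (total order, compatible with addition, $\mathbf 0\preceq\mathbf c$ for all $\mathbf c$), and $F(S)=\max_\preceq\mathcal{H}(S)$. $\mathrm{PF}(S)=\{\mathbf x\in\mathcal{H}(S)\mid \mathbf x+(S\setminus\{0\})\subseteq S\}$. $S$ is pseudo-symmetric if $\mathrm{PF}(S)=\{F(S),F(S)/2\}$. For $L\subseteq\mathbb{N}^p$, $\mathbf x\le_L\mathbf y$ means $\mathbf y-\mathbf x\in L$. For $\mathbf n\in\mathcal{C}$, $I_S(\mathbf n)=\{\mathbf s\in S\mid \mathbf s\le_{\mathcal{C}}\mathbf n\}$. *)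

(* Defs.v *)
From mathcomp Require Import all_boot all_order all_algebra.
Set Implicit Arguments. Unset Strict Implicit. Unset Printing Implicit Defensive.
Import Order.TTheory GRing.Theory Num.Theory.

Definition vec (p : nat) := {ffun 'I_p -> nat}.

Definition vadd p (x y : vec p) : vec p := [ffun i => x i + y i].
Definition vzero p : vec p := [ffun _ => 0%N].
(* componentwise half (only meaningful when all components are even) *)
Definition vhalf p (x : vec p) : vec p := [ffun i => (x i)./2].
Definition half_in_Np p (x : vec p) : Prop := forall i, ~~ odd (x i).

Definition has_card p (P : vec p -> Prop) (n : nat) : Prop :=
  exists s : seq (vec p), [/\ uniq s, size s = n & forall x, x \in s <-> P x].

(* C is the set of integer points of a finitely generated rational cone
   in Q_{>=0}^p *)
Definition integer_cone p (C : vec p -> Prop) : Prop :=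
  exists (m : nat) (G : 'I_m -> 'I_p -> rat),
    (forall k j, (0 <= G k j)%R) /\
    forall x : vec p, C x <->
      exists lam : 'I_m -> rat, (forall k, (0 <= lam k)%R) /\
        forall j, ((x j)%:R = \sum_(k < m) lam k * G k j)%R.

Definition monomial_order p (le : vec p -> vec p -> Prop) : Prop :=
  (forall x, le x x) /\
  (forall x y, le x y -> le y x -> x = y) /\
  (forall x y z, le x y -> le y z -> le x z) /\
  (forall x y, le x y \/ le y x) /\
  (forall x y z, le x y -> le (vadd x z) (vadd y z)) /\
  (forall c, le (vzero p) c).

Definition C_semigroup p (C S : vec p -> Prop) : Prop :=
  [/\ (forall x, S x -> C x),
      S (vzero p),
      (forall x y, S x -> S y -> S (vadd x y)) &
      exists n, has_card (fun x => C x /\ ~ S x) n].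

Definition gaps p (C S : vec p -> Prop) (x : vec p) : Prop := C x /\ ~ S x.

Definition is_frobenius p (C S : vec p -> Prop) (le : vec p -> vec p -> Prop)
  (F : vec p) : Prop :=
  gaps C S F /\ forall h, gaps C S h -> le h F.

Definition PF p (C S : vec p -> Prop) (x : vec p) : Prop :=
  gaps C S x /\ forall s, S s -> s <> vzero p -> S (vadd x s).

Definition pseudo_symmetric p (C S : vec p -> Prop) (F : vec p) : Prop :=
  half_in_Np F /\ forall x, PF C S x <-> (x = F \/ x = vhalf F).

Definition le_L p (L : vec p -> Prop) (x y : vec p) : Prop :=
  exists c, L c /\ y = vadd x c.

Definition I_S p (C S : vec p -> Prop) (n : vec p) (s : vec p) : Prop :=
  S s /\ le_L C s n.

(* Main.v *)
Require Import Defs.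
From mathcomp Require Import all_boot all_order all_algebra.
From mathcomp Require Import zify lra.
From Stdlib Require Import Classical.
Set Implicit Arguments. Unset Strict Implicit. Unset Printing Implicit Defensive.
Import Order.TTheory GRing.Theory Num.Theory.

Section V.
Variable p : nat.
Implicit Types x y z : vec p.

Definition vsub x y : vec p := [ffun i => x i - y i].
Definition weight x := \sum_(i < p) x i.

Lemma vaddC x y : vadd x y = vadd y x.
Proof. by apply/ffunP => i; rewrite !ffunE addnC. Qed.
Lemma vaddA x y z : vadd x (vadd y z) = vadd (vadd x y) z.
Proof. by apply/ffunP => i; rewrite !ffunE addnA. Qed.
Lemma vaddr0 x : vadd x (vzero p) = x.
Proof. by apply/ffunP => i; rewrite !ffunE addn0. Qed.
Lemma vadd0r x : vadd (vzero p) x = x.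
Proof. by apply/ffunP => i; rewrite !ffunE. Qed.
Lemma vadd_inj x y z : vadd x y = vadd x z -> y = z.
Proof. move/ffunP => H; apply/ffunP => i; have := H i; rewrite !ffunE. move=> E. Fail lia. Show. apply/eqP; rewrite -(eqn_add2l (x i)); by apply/eqP. Qed.
Lemma vaddK x y : vsub (vadd x y) x = y.
Proof. by apply/ffunP => i; rewrite !ffunE addKn. Qed.
Lemma vaddKr x y : vsub (vadd x y) y = x.
Proof. by apply/ffunP => i; rewrite !ffunE addnK. Qed.
Lemma vhalfK x : half_in_Np x -> vadd (vhalf x) (vhalf x) = x.
Proof.
move=> H; apply/ffunP => i; rewrite !ffunE addnn.
have := odd_double_half (x i); have := H i; case: (odd (x i)) => //= _; lia.
Qed.
Lemma weightD x y : weight (vadd x y) = weight x + weight y.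
Proof. by rewrite /weight -big_split; apply eq_bigr => i _; rewrite ffunE. Qed.
Lemma weight_pos x : x <> vzero p -> 0 < weight x.
Proof.
move=> H; case: (boolP [exists i, x i != 0]) => [/existsP [i Hi]|].
  rewrite /weight (bigD1 i) //=; lia.
move=> /existsPn Hn; exfalso; apply: H; apply/ffunP => i; rewrite ffunE.
by have := Hn i; rewrite negbK => /eqP.
Qed.
Lemma vadd_eq_self x y : vadd x y = x -> y = vzero p.
Proof. by move=> H; apply: (@vadd_inj x); rewrite vaddr0. Qed.
End V.

Lemma cone_add p (C : vec p -> Prop) : integer_cone C ->
  forall x y, C x -> C y -> C (vadd x y).
Proof.
move=> [m [G [HG HC]]] x y /HC [l1 [H1 E1]] /HC [l2 [H2 E2]].
apply/HC; exists (fun k => l1 k + l2 k)%R; split.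
  by move=> k; rewrite addr_ge0.
move=> j; rewrite ffunE natrD E1 E2 -big_split /=.
by apply: eq_bigr => k _; rewrite mulrDl.
Qed.

Lemma cone_half p (C : vec p -> Prop) : integer_cone C ->
  forall x, C (vadd x x) -> C x.
Proof.
move=> [m [G [HG HC]]] x /HC [l [H1 E1]].
apply/HC; exists (fun k => l k / 2)%R; split.
  by move=> k; rewrite divr_ge0.
move=> j; have := E1 j; rewrite ffunE natrD => E.
have -> : (\sum_(k < m) l k / 2 * G k j = (\sum_(k < m) l k * G k j) / 2)%R.
  by rewrite mulr_suml; apply: eq_bigr => k _; rewrite mulrAC.
rewrite -E; lra.
Qed.

Lemma pf_cover p (C S : vec p -> Prop) (sH : seq (vec p)) :
  (forall x y, C x -> C y -> C (vadd x y)) ->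
  (forall x, S x -> C x) -> S (vzero p) ->
  (forall x y, S x -> S y -> S (vadd x y)) ->
  (forall x, x \in sH <-> gaps C S x) ->
  forall h, gaps C S h -> exists f t, [/\ PF C S f, S t & f = vadd h t].
Proof.
move=> Cadd SC S0 Sadd Hmem.
pose M := \max_(x <- sH) weight x.
have HM : forall h, gaps C S h -> weight h <= M.
  by move=> h /Hmem Hh; rewrite /M; apply: leq_bigmax_seq.
suff: forall n h, gaps C S h -> M - weight h <= n ->
   exists f t, [/\ PF C S f, S t & f = vadd h t].
  by move=> H h Hh; apply: (H _ h Hh).
have step : forall h, gaps C S h -> ~ PF C S h ->
   exists s, [/\ S s, s <> vzero p & gaps C S (vadd h s)].
  move=> h Hh HPF.
  have [s [Ss [s0 Hs]]] : exists s, S s /\ s <> vzero p /\ ~ S (vadd h s).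
    apply: NNPP => Hc; apply: HPF; split => // s Ss s0.
    by apply: NNPP => Hn2; apply: Hc; exists s.
  exists s; split => //; split => //; apply: Cadd; [case: Hh|apply: SC] => //.
elim=> [|n IH] h Hh Hn; (case: (classic (PF C S h)) => HPF;
  [by exists h, (vzero p); rewrite vaddr0 |]);
  have [s [Ss s0 Hg]] := step h Hh HPF.
- have := HM _ Hg; rewrite weightD; have := weight_pos s0; lia.
- have [|f [t [Pf St Ef]]] := IH (vadd h s) Hg.
    have := HM _ Hg; rewrite weightD; have := weight_pos s0; lia.
  exists f, (vadd s t); split => //; first by apply: Sadd.
  by rewrite Ef vaddA.
Qed.
Unset Implicit Arguments.

Theorem mainTheorem3 (p : nat) (C S : vec p -> Prop)
  (le : vec p -> vec p -> Prop) (F : vec p) (g : nat) :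
  integer_cone C ->
  monomial_order le ->
  C_semigroup C S ->
  (exists x, C x /\ ~ S x) ->
  has_card (gaps C S) g ->
  is_frobenius C S le F ->
  pseudo_symmetric C S F <->
  ((exists k, has_card (I_S C S F) k /\ g = 1 + k) /\ half_in_Np F).
Proof.
move=> Hcone [_ [lanti [_ [_ [lcomp l0]]]]] [SC S0 Sadd _] _ [sH [Hu Hsz Hmem]]
  [HF HFmax].
have Cadd := cone_add Hcone.
have Chalf := cone_half Hcone.
set Fh := vhalf F.
have F0 : F <> vzero p by move=> E; case: HF => _; rewrite E.
have Fhgap : half_in_Np F -> gaps C S Fh.
  move=> Hh; have E := vhalfK Hh; split.
    by apply: Chalf; rewrite E; case: HF.
  by move=> SFh; case: HF => _ []; rewrite -E; apply: Sadd.
have FhF : half_in_Np F -> Fh <> F.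
  move=> Hh E; apply: F0; have E2 := vhalfK Hh; rewrite -/Fh E in E2.
  exact: vadd_eq_self E2.
have PFF : PF C S F.
  split => // s Ss s0; apply: NNPP => Hn.
  have Hg : gaps C S (vadd F s) by split => //; apply: Cadd; [case: HF|apply: SC].
  have L1 := HFmax _ Hg.
  have L2 : le F (vadd F s) by have := lcomp _ _ F (l0 s); rewrite vadd0r vaddC.
  by apply: s0; apply: vadd_eq_self; apply: (lanti _ _ L1 L2).
split.
- move=> [Hh HPF]; rewrite -/Fh in HPF.
  have key : forall h, gaps C S h -> h <> Fh -> exists t, S t /\ F = vadd h t.
    move=> h Hh1 hne.
    have [f [t [Pf St Ef]]] := pf_cover Cadd SC S0 Sadd Hmem Hh1.
    case: (proj1 (HPF f) Pf) => Ef2; first by exists t; rewrite -Ef2.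
    have t0 : t <> vzero p by move=> E; apply: hne; rewrite -Ef2 Ef E vaddr0.
    have := proj2 (proj2 (HPF Fh) (or_intror erefl)) t St t0.
    move=> S2; exists (vadd Fh t); split => //.
    have E3 : Fh = vadd h t by rewrite -Ef2 Ef.
    have EF := vhalfK Hh; rewrite -/Fh in EF.
    by rewrite -{1}EF {1}E3 -vaddA (vaddC t).
  split => //.
  exists (size [seq h <- sH | h != Fh]); split; last first.
    rewrite -Hsz -(count_predC (pred1 Fh) sH) count_uniq_mem //.
    have Hin : Fh \in sH by apply/Hmem; apply: Fhgap.
    rewrite Hin.
    by rewrite size_filter.
  exists (map (vsub F) [seq h <- sH | h != Fh]); split.
  + rewrite map_inj_in_uniq ?filter_uniq // => h1 h2.
    rewrite !mem_filter => /andP [/eqP n1 /Hmem g1] /andP [/eqP n2 /Hmem g2] E.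
    have [t1 [_ E1]] := key _ g1 n1; have [t2 [_ E2]] := key _ g2 n2.
    have A1 : vsub F h1 = t1 by rewrite E1 vaddK.
    have A2 : vsub F h2 = t2 by rewrite E2 vaddK.
    have B1 : vsub F t1 = h1 by rewrite E1 vaddKr.
    have B2 : vsub F t2 = h2 by rewrite E2 vaddKr.
    by rewrite -B1 -B2 -A1 -A2 E.
  + by rewrite size_map.
  + move=> x; split.
    * move=> /mapP [h]; rewrite mem_filter => /andP [/eqP n1 /Hmem g1] ->.
      have [t [St E]] := key _ g1 n1; rewrite E vaddK; split => //.
      by exists h; split; [case: g1|rewrite vaddC].
    * move=> [Sx [c [Cc E]]].
      have gc : gaps C S c by split => // Sc; case: HF => _ []; rewrite E; apply: Sadd.
      apply/mapP; exists c; last by rewrite E vaddKr.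
      rewrite mem_filter; apply/andP; split; last by apply/Hmem.
      apply/eqP => cE; case: gc => _ []; rewrite cE.
      have EF := vhalfK Hh; rewrite -/Fh in EF.
      have E3 : vadd Fh Fh = vadd Fh x by rewrite EF E cE vaddC.
      by rewrite (vadd_inj E3).
- move=> [[k [[sI [HuI HszI HmemI]] Hg]] Hh].
  have EF := vhalfK Hh; rewrite -/Fh in EF.
  have FhG := Fhgap Hh.
  have Iinfo : forall s, s \in sI -> S s /\ gaps C S (vsub F s) /\ F = vadd s (vsub F s).
    move=> s /HmemI [Ss [c [Cc E]]]; rewrite E vaddK; split => //; split => //.
    by split => // Sc; case: HF => _ []; rewrite E; apply: Sadd.
  pose sJ := Fh :: map (vsub F) sI.
  have uJ : uniq sJ.
    rewrite /sJ /= map_inj_in_uniq // ?HuI ?andbT.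
      apply/mapP => [[s Hs E]]; have [Ss [_ E2]] := Iinfo s Hs.
      apply: (proj2 FhG); rewrite -E in E2.
      rewrite -EF vaddC in E2.
      by rewrite (vadd_inj E2).
    move=> s1 s2 H1 H2 E; have [_ [_ E1]] := Iinfo s1 H1; have [_ [_ E2]] := Iinfo s2 H2.
    have B1 : vsub F (vsub F s1) = s1 by rewrite {1}E1 vaddKr.
    have B2 : vsub F (vsub F s2) = s2 by rewrite {1}E2 vaddKr.
    by rewrite -B1 -B2 E.
  have sub : {subset sJ <= sH}.
    move=> x; rewrite inE => /orP [/eqP ->|/mapP [s Hs ->]]; apply/Hmem => //.
    by have [_ []] := Iinfo s Hs.
  have Hle : size sH <= size sJ by rewrite /sJ /= size_map HszI Hsz Hg.
  have [_ eqJ] := uniq_min_size uJ sub Hle.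
  have key : forall h, gaps C S h -> h <> Fh -> exists t, S t /\ F = vadd h t.
    move=> h /Hmem; rewrite -eqJ inE => /orP [/eqP -> //|/mapP [s Hs ->]] _.
    have [Ss [_ E]] := Iinfo s Hs; exists s; split => //; by rewrite vaddC.
  split => // x; split.
  + move=> [gx Hx]; case: (classic (x = Fh)) => xh; first by right.
    have [t [St E]] := key x gx xh; left.
    case: (classic (t = vzero p)) => t0; first by rewrite E t0 vaddr0.
    by case: HF => _ []; rewrite E; apply: Hx.
  + move=> [->|->] //; split => // s Ss s0; apply: NNPP => Hn.
    have gh : gaps C S (vadd Fh s) by split => //; apply: Cadd; [case: FhG|apply: SC].
    have [|t [St E]] := key _ gh.
      by move=> E; apply: s0; apply: vadd_eq_self E.
    rewrite -vaddA -{1}EF in E; have E2 := vadd_inj E.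
    by case: FhG => _ []; rewrite E2; apply: Sadd.
Qed.
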